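(* Let $d=1$, $\hbar>0$, $M>0$, $x,x_0\in\mathbb{R}$, $t_0<t$, and let $m$ be a positive Borel measure on $\mathbb{R}$ with $\int_{\mathbb{R}}e^{C|\alpha|}dm(\alpha)<\infty$ for all $C>0$ and $m(\mathbb{R}\setminus\{0\})>0$. Then the power series in $g$ \[ \sum_{n=0}^\infty\frac1{n!}\Bigl(\frac{-ig(t-t_0)}{\hbar}\Bigr)^n\int_{[0,1]^n}\int_{\mathbb{R}^n}\exp\Bigl\{-\frac{\hbar}{2M}(t-t_0)\sum_{j,k=1}^n\alpha_j\alpha_k(\sigma_j\sigma_k-\sigma_j\wedge\sigma_k)\Bigr\}\exp\Bigl\{\sum_{j=1}^n\alpha_j\bigl[\sigma_jx+(1-\sigma_j)x_0\bigr]\Bigr\}\prod_{j=1}^ndm(\alpha_j)\,d^n\sigma \] diverges for every $g\neq0$.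
   Context: $\sigma_j\wedge\sigma_k=\min(\sigma_j,\sigma_k)$. This series is the formal perturbation series (normalized by the free kernel) obtained from the Schr\''odinger propagator with potential $gV(x)=g\int e^{\alpha x}dm(\alpha)$ by analytic continuation of the mass $M\mapsto iM$, formally solving the heat equation with potential $-igV$. *)

(* Defs.v *)
From HB Require Import structures.
From mathcomp Require Import all_boot all_order all_algebra.
From mathcomp Require Import all_classical all_reals all_analysis.
From mathcomp Require Import complex.

Set Implicit Arguments.
Unset Strict Implicit.
Unset Printing Implicit Defensive.

Import Order.TTheory GRing.Theory Num.Theory.
Import numFieldNormedType.Exports.
Local Open Scope classical_set_scope.
Local Open Scope ring_scope.
Local Open Scope complex_scope.

(* Iterated integral  \int_{D} ... \int_{D} f(x_1,...,x_k) dmu(x_1)...dmu(x_k)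
   of a nonnegative extended-real function of k variables (collected as a list
   [:: x_1; ...; x_k]); for nonnegative measurable integrands this is the
   integral against the k-fold product measure (Tonelli). *)
Fixpoint iter_int d (T : measurableType d) (R : realType)
  (mu : {measure set T -> \bar R}) (D : set T) (k : nat)
  (f : seq T -> \bar R) {struct k} : \bar R :=
  match k with
  | 0 => f [::]
  | k'.+1 => (\int[mu]_(y in D) iter_int mu D k' (fun s => f (y :: s)))%E
  end.

Definition integrand (R : realType) (hbar M t t0 x x0 : R)
  (alpha sigma : seq R) : R :=
  let n := size alpha in
  expR (- (hbar / (2 * M)) * (t - t0) *
        \sum_(j < n) \sum_(k < n)
          alpha`_j * alpha`_k * (sigma`_j * sigma`_k - Num.min sigma`_j sigma`_k))
  * expR (\sum_(j < n) alpha`_j * (sigma`_j * x + (1 - sigma`_j) * x0)).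

Definition I_n (R : realType) (m : {measure set R -> \bar R})
  (hbar M t t0 x x0 : R) (n : nat) : \bar R :=
  iter_int (@lebesgue_measure R) `[0, 1] n (fun sigma =>
    iter_int m setT n (fun alpha => (integrand hbar M t t0 x x0 alpha sigma)%:E)).

Definition term (R : realType) (m : {measure set R -> \bar R})
  (hbar M t t0 x x0 : R) (g : R[i]) (n : nat) : R[i] :=
  (n`!%:R)^-1 * (- 'i * g * ((t - t0) / hbar)%:C) ^+ n
  * (fine (I_n m hbar M t t0 x x0 n))%:C.

Definition cvgC (R : realType) (u : nat -> R[i]) : Prop :=
  exists l : R[i],
    (fun n => complex.Re (u n)) @ \oo --> complex.Re l /\
    (fun n => complex.Im (u n)) @ \oo --> complex.Im l.

Definition series_converges (R : realType) (m : {measure set R -> \bar R})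
  (hbar M t t0 x x0 : R) (g : R[i]) : Prop :=
  (forall n, (I_n m hbar M t t0 x x0 n < +oo)%E) /\
  cvgC (fun N => \sum_(n < N) term m hbar M t t0 x x0 g n).

(* Main.v *)
Require Import Defs.
From HB Require Import structures.
From mathcomp Require Import all_boot all_order all_algebra.
From mathcomp Require Import all_classical all_reals all_analysis.
From mathcomp Require Import complex.
From mathcomp Require Import ring lra.
Import Order.TTheory GRing.Theory Num.Theory.
Import numFieldNormedType.Exports.
Local Open Scope classical_set_scope.
Local Open Scope ring_scope.
Import HBNNSimple.

Lemma lb_int d (T : measurableType d) (R : realType) (mu : {measure set T -> \bar R})
  (D A : set T) (f : T -> \bar R) (c : {nonneg R}) :
  measurable (A `&` D) -> (forall x, D x -> 0 <= f x)%E ->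
  (forall x, A x -> D x -> (c%:num)%:E <= f x)%E ->
  ((c%:num)%:E * mu (A `&` D) <= \int[mu]_(x in D) f x)%E.
Proof.
move=> mAD f0 fc.
rewrite ge0_integralE//.
pose h := mul_nnsfun (cst_nnsfun T c) (indic_nnsfun R mAD).
have -> : ((c%:num)%:E * mu (A `&` D) = sintegral mu h)%E.
  have := sintegralrM mu c%:num (indic_nnsfun R mAD).
  rewrite (_ : sintegral mu (indic_nnsfun R mAD) = mu (A `&` D)); last first.
    by rewrite -sintegral_indic.
  by move=> <-.
apply: ereal_sup_ubound; exists h => //= x.
rewrite /patch /= measurable_realfun.mindicE /indic /=; case: (boolP (x \in A `&` D)) => [|].
  rewrite mulr1 in_setI => /andP[/set_mem Ax /set_mem Dx].
  by rewrite mem_set // fc.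
rewrite mulr0 => _; case: ifP => // /set_mem Dx; exact: f0.
Qed.

Fixpoint AllP (T : Type) (P : T -> Prop) (s : seq T) : Prop :=
  match s with [::] => True | y :: s' => P y /\ @AllP T P s' end.
Arguments AllP {T}.

Lemma AllP_nth (T : Type) (P : T -> Prop) (x0 : T) s :
  AllP P s -> forall j, (j < size s)%N -> P (nth x0 s j).
Proof.
elim: s => [//|y s IH] /= [Py Ps] [|j] //= hj; exact: IH.
Qed.

Lemma iter_ge0 d (T : measurableType d) (R : realType)
  (mu : {measure set T -> \bar R}) (D : set T) k (f : seq T -> \bar R) :
  (forall s, 0 <= f s)%E -> (0 <= iter_int mu D k f)%E.
Proof.
elim: k f => [|k IH] f f0 /=; first exact: f0.
by apply: integral_ge0 => y _; apply: IH.
Qed.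

Lemma iter_lb d (T : measurableType d) (R : realType)
  (mu : {measure set T -> \bar R}) (D A : set T) k (f : seq T -> \bar R)
  (K del : R) :
  measurable (A `&` D) -> 0 <= K -> 0 <= del -> (del%:E <= mu (A `&` D))%E ->
  (forall s, 0 <= f s)%E ->
  (forall s, size s = k -> AllP (fun y => A y /\ D y) s -> (K%:E <= f s)%E) ->
  ((K * del ^+ k)%:E <= iter_int mu D k f)%E.
Proof.
move=> mAD K0 d0 dmu.
elim: k f => [|k IH] f f0 fK /=; first by rewrite expr0 mulr1; exact: fK.
have c0 : 0 <= K * del ^+ k by rewrite mulr_ge0 // exprn_ge0.
apply: (@le_trans _ _ (((NngNum c0)%:num)%:E * mu (A `&` D))%E); last first.
  apply: lb_int => // [y Dy|y Ay Dy]; first exact: iter_ge0.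
  apply: IH => // s hs Ps; apply: fK => /=; first by rewrite hs.
  by split.
rewrite /= exprSr mulrA EFinM.
by apply: lee_pmul => //; rewrite lee_fin.
Qed.

Lemma integrand_lb (R : realType) (hbar M t t0 x x0 : R) (A : R -> Prop)
  (eps L : R) (alpha sigma : seq R) :
  0 < hbar -> 0 < M -> t0 < t -> 0 <= L ->
  (forall a b, A a -> A b -> eps ^+ 2 <= a * b) ->
  (forall a, A a -> `|a| <= L) ->
  size sigma = size alpha ->
  (forall j, (j < size alpha)%N -> A alpha`_j) ->
  (forall j, (j < size alpha)%N -> 1/4 <= sigma`_j <= 3/4) ->
  expR (hbar / (2 * M) * (t - t0) * eps ^+ 2 / 16 * (size alpha)%:R) ^+ size alpha
  * expR (- (L * (`|x| + `|x0|))) ^+ size alpha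
  <= integrand hbar M t t0 x x0 alpha sigma.
Proof.
move=> hb0 M0 tt0 L0 hA hL hs hAj hsj.
rewrite /integrand; set n := size alpha.
set c0 := hbar / (2 * M) * (t - t0).
have c00 : 0 < c0 by rewrite /c0 mulr_gt0 ?divr_gt0 ?mulr_gt0 ?subr_gt0.
apply: ler_pM; rewrite ?exprn_ge0 ?expR_ge0 // -expRM_natl ler_expR.
- have hS : \sum_(j < n) \sum_(k < n)
      alpha`_j * alpha`_k * (sigma`_j * sigma`_k - Num.min sigma`_j sigma`_k)
      <= \sum_(j < n) \sum_(k < n) (- (eps ^+ 2 / 16)).
    apply: ler_sum => j _; apply: ler_sum => k _.
    have hP := hA _ _ (hAj _ (ltn_ord j)) (hAj _ (ltn_ord k)).
    have /andP[s1 s2] := hsj _ (ltn_ord j).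
    have /andP[s3 s4] := hsj _ (ltn_ord k).
    have he : 0 <= eps ^+ 2 by rewrite sqr_ge0.
    have hQ : sigma`_j * sigma`_k - Num.min sigma`_j sigma`_k <= - (1/16).
      rewrite /Num.Def.minr; case: ifP => h.
        have h1 : 0 <= (sigma`_j - 1/4) * (1 - sigma`_k - 1/4) by apply: mulr_ge0; lra.
        lra.
      have h1 : 0 <= (sigma`_k - 1/4) * (1 - sigma`_j - 1/4) by apply: mulr_ge0; lra.
      lra.
    set P := alpha`_j * alpha`_k in hP *; set Q := _ - _ in hQ *.
    have h1 : 0 <= (P - eps ^+ 2) * (- Q) by apply: mulr_ge0; lra.
    have h2 : 0 <= eps ^+ 2 * (- Q - 1/16) by apply: mulr_ge0; lra.
    rewrite -subr_ge0.
    have -> : - (eps ^+ 2 / 16) - P * Q = (P - eps ^+ 2) * (- Q) + eps ^+ 2 * (- Q - 1/16) by ring.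
    exact: addr_ge0 h1 h2.
  rewrite !sumr_const !card_ord in hS.
  have {}hS : \sum_(j < n) \sum_(k < n)
      alpha`_j * alpha`_k * (sigma`_j * sigma`_k - Num.min sigma`_j sigma`_k)
      <= - (eps ^+ 2 / 16) * n%:R * n%:R.
    by apply: (le_trans hS); rewrite !mulr_natr.
  rewrite !mulNr; set S := \sum_(j < n) _ in hS *.
  have hn : 0 <= n%:R :> R by [].
  rewrite -/c0.
  apply: (le_trans _ (_ : - (c0 * (-(eps^+2/16) * n%:R * n%:R)) <= - (c0 * S))).
    by rewrite le_eqVlt; apply/orP; left; apply/eqP; rewrite /c0; ring.
  by rewrite lerN2 ler_wpM2l // ltW.
- have hS : \sum_(j < n) (- (L * (`|x| + `|x0|)))
      <= \sum_(j < n) alpha`_j * (sigma`_j * x + (1 - sigma`_j) * x0).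
    apply: ler_sum => j _.
    have /andP[s1 s2] := hsj _ (ltn_ord j).
    set y := alpha`_j * (sigma`_j * x + (1 - sigma`_j) * x0).
    have : `|y| <= L * (`|x| + `|x0|).
      rewrite /y normrM; apply: ler_pM => //; first exact: hL (hAj _ (ltn_ord j)).
      rewrite (le_trans (ler_normD _ _)) // !normrM.
      rewrite (ger0_norm (_ : 0 <= sigma`_j)); last lra.
      rewrite (ger0_norm (_ : 0 <= 1 - sigma`_j)); last lra.
      have := normr_ge0 x; have := normr_ge0 x0.
      have h1 : sigma`_j * `|x| <= `|x| by rewrite ler_piMl //; lra.
      have h2 : (1 - sigma`_j) * `|x0| <= `|x0| by rewrite ler_piMl //; lra.
      lra.
    have := ler_norm (- y); rewrite normrN; lra.
  rewrite sumr_const card_ord in hS.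
  by rewrite mulrC mulr_natr.
Qed.

Lemma itv_props (R : realType) (e L : R) : 0 < e ->
  (forall a b, [set` `[e, L]] a -> [set` `[e, L]] b -> e ^+ 2 <= a * b) /\
  (forall a, [set` `[e, L]] a -> `|a| <= L) /\
  (forall a b, [set` `[-L, -e]] a -> [set` `[-L, -e]] b -> e ^+ 2 <= a * b) /\
  (forall a, [set` `[-L, -e]] a -> `|a| <= L).
Proof.
move=> e0; split; [|split; [|split]].
- move=> a b; rewrite /= !in_itv /= => /andP[a1 a2] /andP[b1 b2].
  have h : 0 <= (a - e) * (b - e) by apply: mulr_ge0; lra.
  rewrite expr2; nra.
- move=> a; rewrite /= in_itv /= => /andP[a1 a2].
  rewrite ger0_norm; lra.
- move=> a b; rewrite /= !in_itv /= => /andP[a1 a2] /andP[b1 b2].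
  have h : 0 <= (- e - a) * (- e - b) by apply: mulr_ge0; lra.
  rewrite expr2; nra.
- move=> a; rewrite /= in_itv /= => /andP[a1 a2].
  rewrite ler0_norm; lra.
Qed.

Lemma pick_set (R : realType) (m : {measure set R -> \bar R}) :
  (0 < m (~` [set 0%R]))%E ->
  exists (A : set R) (e L : R), measurable A /\ (0 < m A)%E /\ 0 < e /\ 0 <= L /\
    (forall a b, A a -> A b -> e ^+ 2 <= a * b) /\ (forall a, A a -> `|a| <= L).
Proof.
move=> hm.
pose B (k : nat) : set R := [set` `[(k.+1%:R)^-1, k.+1%:R]] `|` [set` `[- k.+1%:R, - (k.+1%:R)^-1]].
have mB k : measurable (B k) by apply: measurableU; exact: measurable_itv.
have [k hk] : exists k, (0 < m (B k))%E.
  apply: contrapT => H.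
  have B0 k : m (B k) = 0%E.
    apply/eqP; rewrite eq_le measure_ge0 andbT leNgt; apply/negP => h.
    by apply: H; exists k.
  move: hm; rewrite lt_neqAle => /andP[/eqP hne _]; apply: hne; apply/eqP.
  rewrite eq_le measure_ge0 /=.
  have -> : 0%E = (\sum_(0 <= n <oo) m (B n))%E.
    by rewrite eseries0 // => i _ _; rewrite B0.
  apply: measure_sigma_subadditive => //; first exact: measurableC.
  move=> a /= a0.
  have aa : 0 < `|a| by rewrite normr_gt0; apply/eqP.
  exists (Num.trunc (`|a| + `|a|^-1)) => //.
  set k := Num.trunc _.
  have hk := truncnS_gt (`|a| + `|a|^-1); rewrite -/k in hk.
  have ia : 0 < `|a|^-1 by rewrite invr_gt0.
  have k0 : 0 < k.+1%:R :> R by [].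
  have h1 : `|a| < k.+1%:R by lra.
  have h2 : (k.+1%:R)^-1 <= `|a|.
    rewrite -[X in X <= _]mul1r ler_pdivrMr //.
    have h : `|a|^-1 <= k.+1%:R by lra.
    by have := ler_wpM2l (ltW aa) h; rewrite mulfV ?gt_eqF.
  rewrite /B /=; case: (ltP 0 a) => a0'.
    left; rewrite /= in_itv /=; rewrite gtr0_norm // in h1 h2.
    by rewrite h2 ltW.
  right; rewrite /= in_itv /=.
  have an : a < 0 by rewrite lt_neqAle a0' andbT; apply/eqP.
  rewrite ltr0_norm // in h1 h2; apply/andP; split; [rewrite lerNl; exact: ltW | by rewrite lerNr].
have e0 : 0 < (k.+1%:R : R)^-1 by rewrite invr_gt0.
have [p1 [p2 [p3 p4]]] := @itv_props R _ (k.+1%:R : R) e0.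
pose I1 : set R := [set` `[(k.+1%:R : R)^-1, k.+1%:R]].
pose I2 : set R := [set` `[- k.+1%:R, - (k.+1%:R : R)^-1]].
have : (0 < m I1 + m I2)%E.
  by apply: (lt_le_trans hk); apply: measureU2; exact: measurable_itv.
case: (ltP 0%E (m I1)) => h1.
  move=> _; exists I1, (k.+1%:R)^-1, k.+1%:R.
  by split; [exact: measurable_itv| split].
have -> : m I1 = 0%E.
  by apply/eqP; rewrite eq_le h1 measure_ge0.
rewrite add0e => h2.
exists I2, (k.+1%:R)^-1, k.+1%:R.
by split; [exact: measurable_itv| split].
Qed.

Lemma fact_le_pow n : (n`! <= n ^ n)%N.
Proof.
elim: n => [//|n IH]; rewrite factS expnS leq_mul //.
apply: (leq_trans IH); case: n {IH} => [//|n].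
by rewrite leq_exp2r.
Qed.

Lemma growth (R : realType) (rho kap : R) : 0 < rho -> 0 < kap ->
  exists N, forall n, (N <= n)%N ->
    1 <= rho ^+ n * expR (kap * n%:R) ^+ n / n`!%:R.
Proof.
move=> r0 k0.
set c := rho * (kap / 2) ^+ 2.
have c0 : 0 < c by rewrite /c mulr_gt0 // exprn_gt0 // divr_gt0.
exists (Num.trunc (c^-1)).+1 => n hn.
have hc := truncnS_gt (c^-1).
have hn' : ((Num.trunc (c^-1)).+1%:R <= n%:R :> R) by rewrite ler_nat.
have n0 : 0 < n%:R :> R.
  by apply: (lt_le_trans _ hn'); rewrite ltr0n.
have cn : 1 <= c * n%:R.
  have : c^-1 <= n%:R by lra.
  move=> h; have := ler_wpM2l (ltW c0) h; rewrite mulfV ?gt_eqF //.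
have ex : (kap * n%:R / 2) ^+ 2 <= expR (kap * n%:R).
  have -> : expR (kap * n%:R) = expR (kap * n%:R / 2) ^+ 2.
    by rewrite -expRM_natl; congr expR; field.
  apply: lerXn2r; rewrite ?nnegrE ?expR_ge0 //.
    by rewrite divr_ge0 // mulr_ge0 // ltW.
  have := expR_ge1Dx (kap * n%:R / 2); lra.
have key : n%:R <= rho * expR (kap * n%:R).
  apply: (le_trans _ (ler_wpM2l (ltW r0) ex)).
  have -> : rho * (kap * n%:R / 2) ^+ 2 = (c * n%:R) * n%:R.
    by rewrite /c; field.
  by rewrite ler_peMl // ltW.
rewrite ler_pdivlMr ?ltr0n ?fact_gt0 // mul1r -exprMn.
apply: (@le_trans _ _ ((n%:R : R) ^+ n)).
  by rewrite -natrX ler_nat fact_le_pow.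
apply: (@lerXn2r R n); rewrite ?nnegrE // ?ltW //.
by rewrite mulr_gt0 // expR_gt0.
Qed.

Section C.
Variable R : realType.
Local Notation nc := (@Normc.normc R).

Lemma nc_sqr (w : R[i]) : nc w ^+ 2 = complex.Re w ^+ 2 + complex.Im w ^+ 2.
Proof. by case: w => a b /=; rewrite sqr_sqrtr // addr_ge0 // sqr_ge0. Qed.

Lemma nc_ge0 (w : R[i]) : 0 <= nc w.
Proof. by case: w => a b /=; rewrite sqrtr_ge0. Qed.

Lemma nc_exp (w : R[i]) n : nc (w ^+ n) = nc w ^+ n.
Proof.
elim: n => [|n IH]; first by rewrite !expr0 Normc.normc1.
by rewrite !exprS Normc.normcM IH.
Qed.

Lemma nc_real (r : R) : nc (r%:C)%C = `|r|.
Proof. by rewrite /= expr0n /= addr0 sqrtr_sqr. Qed.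

Lemma nc_nat n : nc (n%:R) = n%:R.
Proof. by rewrite normcMn Normc.normc1. Qed.

Lemma nc_mi : nc (- 'i)%C = 1.
Proof. by rewrite /= oppr0 expr0n /= add0r sqrrN expr1n sqrtr1. Qed.

Lemma nc_gt0 (w : R[i]) : w != 0 -> 0 < nc w.
Proof.
move=> w0; rewrite lt_neqAle nc_ge0 andbT; apply/eqP => h.
by move/eqP: w0; apply; apply: Normc.eq0_normc.
Qed.

Lemma ReD (a b : R[i]) : complex.Re (a + b) = complex.Re a + complex.Re b.
Proof. by case: a; case: b. Qed.
Lemma ImD (a b : R[i]) : complex.Im (a + b) = complex.Im a + complex.Im b.
Proof. by case: a; case: b. Qed.

Lemma cvg_diff0 (f : nat -> R) (v : nat -> R) (l : R) :
  (fun n => f n) @ \oo --> l ->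
  (forall n, f n.+1 = f n + v n) -> v @ \oo --> 0.
Proof.
move=> hf hv.
have : (fun n => f n.+1 - f n) @ \oo --> l - l.
  apply: cvgB => //; by rewrite (cvg_shiftS (fun n => f n)).
rewrite subrr; apply: cvg_trans; apply: near_eq_cvg; near=> n.
by rewrite hv addrC addKr.
Unshelve. all: by end_near.
Qed.
Arguments cvg_diff0 {f v l}.

Lemma cvgC_term (u : nat -> R[i]) :
  cvgC (fun N => \sum_(n < N) u n) ->
  exists N, forall n, (N <= n)%N ->
    complex.Re (u n) ^+ 2 + complex.Im (u n) ^+ 2 < 1.
Proof.
case=> l [hre him].
have h1 : (fun n => complex.Re (u n)) @ \oo --> 0.
  by apply: (cvg_diff0 hre) => n; rewrite big_ord_recr ReD.
have h2 : (fun n => complex.Im (u n)) @ \oo --> 0.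
  by apply: (cvg_diff0 him) => n; rewrite big_ord_recr ImD.
have hh : (0:R) < 1/2 by lra.
have [N1 _ H1] := cvgr0_norm_lt _ h1 _ hh.
have [N2 _ H2] := cvgr0_norm_lt _ h2 _ hh.
exists (maxn N1 N2) => n hn.
have := H1 n; rewrite /= (leq_trans (leq_maxl _ _) hn) => /(_ isT).
have := H2 n; rewrite /= (leq_trans (leq_maxr _ _) hn) => /(_ isT).
rewrite !ltr_norml => /andP[a1 a2] /andP[b1 b2].
nra.
Qed.
End C.

Theorem mainTheorem4 (R : realType) (hbar M : R) (x x0 t0 t : R)
  (m : {measure set R -> \bar R}) :
  0 < hbar -> 0 < M -> t0 < t ->
  (forall C : R, 0 < C ->
     (\int[m]_(a in [set: R]) (expR (C * `|a|))%:E < +oo)%E) ->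
  (0 < m (~` [set 0%R]))%E ->
  forall g : R[i], g != 0 -> ~ series_converges m hbar M t t0 x x0 g.
Proof.
move=> hb0 M0 tt0 _ hm g g0 [hfin hcv].
have [A [e [L [mA [mA0 [e0 [L0 [hA hL]]]]]]]] := @pick_set R m hm.
have [dm [dm0 hdm]] : exists dm : R, 0 < dm /\ (dm%:E <= m (A `&` setT))%E.
  rewrite setIT; move: mA0; case: (m A) => [r| |] //.
  - move=> r0; exists r; split; last by [].
    by rewrite -lte_fin.
  - by move=> _; exists 1; split; [|exact: leey].
set kap := hbar / (2 * M) * (t - t0) * e ^+ 2 / 16.
set bet := L * (`|x| + `|x0|).
pose Kn (n : nat) := expR (kap * n%:R) ^+ n * expR (- bet) ^+ n.
have Kn0 n : 0 <= Kn n by rewrite /Kn mulr_ge0 // exprn_ge0 // expR_ge0.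
have int0 a s : 0 <= integrand hbar M t t0 x x0 a s.
  by rewrite /integrand mulr_ge0 // expR_ge0.
have Ilb n : ((Kn n * dm ^+ n * (1/2) ^+ n)%:E <= I_n m hbar M t t0 x x0 n)%E.
  rewrite /I_n.
  have := @iter_lb _ _ _ (@lebesgue_measure R) `[0, 1] [set` `[(1/4 : R), 3/4]] n _ (Kn n * dm ^+ n) (1/2).
  move=> H; apply: H.
  - by apply: measurableI; exact: measurable_itv.
  - by rewrite mulr_ge0 // exprn_ge0 // ltW.
  - by [].
  - rewrite setIidl; last first.
      by move=> y; rewrite /= !in_itv /= => /andP[h1 h2]; apply/andP; split; lra.
    have HL : lebesgue_measure [set` `[(1/4:R), 3/4]] = ((3/4 - 1/4 : R))%:E.
      by rewrite lebesgue_measure_itv /= lte_fin ifT //; lra.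
    apply: (@le_trans _ _ ((3/4 - 1/4 : R)%:E)); first by rewrite lee_fin; lra.
    by rewrite -HL.
  - by move=> s; apply: iter_ge0 => a; rewrite lee_fin.
  move=> s hs Ps; apply: (@iter_lb _ _ _ _ _ A _ _ _ dm) => //.
  - by rewrite setIT.
  - exact: ltW.
  - by move=> a; rewrite lee_fin.
  move=> a ha Pa; rewrite lee_fin.
  have := @integrand_lb R hbar M t t0 x x0 A e L a s hb0 M0 tt0 L0 hA hL.
  rewrite ha hs => /(_ erefl); apply.
  - move=> j hj; have := AllP_nth _ _ 0 _ Pa; rewrite ha => /(_ j hj) [].
    by [].
  - move=> j hj; have := AllP_nth _ _ 0 _ Ps; rewrite hs => /(_ j hj) [].
    rewrite /= in_itv /= => /andP[h1 h2] _; apply/andP; split; lra.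
have tau0 : 0 < (t - t0) / hbar by rewrite divr_gt0 // subr_gt0.
set ng := Normc.normc g.
have ng0 : 0 < ng by exact: nc_gt0.
set rho := ng * ((t - t0) / hbar) * expR (- bet) * dm * (1/2).
have rho0 : 0 < rho.
  by rewrite /rho; repeat apply: mulr_gt0 => //; rewrite ?invr_gt0 ?subr_gt0 ?expR_gt0.
have kap0 : 0 < kap.
  by rewrite /kap; repeat apply: mulr_gt0 => //; rewrite ?invr_gt0 ?subr_gt0 ?exprn_gt0 ?mulr_gt0.
have [N1 HN1] := @growth R rho kap rho0 kap0.
have [N2 HN2] := @cvgC_term R _ hcv.
set n := maxn N1 N2.
have := HN2 n (leq_maxr _ _); rewrite -nc_sqr.
have := HN1 n (leq_maxl _ _).
have hI0 : (0 <= I_n m hbar M t t0 x x0 n)%E.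
  apply: iter_ge0 => s; apply: iter_ge0 => a; rewrite lee_fin //.
have hIf : (fine (I_n m hbar M t t0 x x0 n))%:E = I_n m hbar M t t0 x x0 n.
  by rewrite fineK // ge0_fin_numE.
have hIlb : Kn n * dm ^+ n * (1/2) ^+ n <= fine (I_n m hbar M t t0 x x0 n).
  by rewrite -lee_fin hIf.
have hF0 : 0 <= fine (I_n m hbar M t t0 x x0 n) by rewrite -lee_fin hIf.
have -> : Normc.normc (term m hbar M t t0 x x0 g n) =
    (n`!%:R)^-1 * (ng * ((t - t0) / hbar)) ^+ n * fine (I_n m hbar M t t0 x x0 n).
  rewrite /term !Normc.normcM Normc.normcV nc_nat nc_exp !Normc.normcM nc_mi
    !nc_real mul1r !ger0_norm // ltW //.
move=> h1 h2.
have : 1 <= (n`!%:R)^-1 * (ng * ((t - t0) / hbar)) ^+ n * fine (I_n m hbar M t t0 x x0 n).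
  apply: (le_trans h1).
  have -> : rho ^+ n * expR (kap * n%:R) ^+ n / n`!%:R =
      (n`!%:R)^-1 * (ng * ((t - t0) / hbar)) ^+ n * (Kn n * dm ^+ n * (1/2) ^+ n).
    rewrite /rho /Kn !exprMn; ring.
  apply: ler_wpM2l => //.
  by rewrite mulr_ge0 ?exprn_ge0 ?invr_ge0 // mulr_ge0 // ltW.
move=> h3.
have : 1 <= ((n`!%:R)^-1 * (ng * ((t - t0) / hbar)) ^+ n * fine (I_n m hbar M t t0 x x0 n)) ^+ 2.
  by rewrite expr2; apply: (le_trans h3); rewrite ler_peMr // (le_trans _ h3).
lra.
Qed.
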